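(* Let $M$ and $M'$ be end-decisive MM-QFAs that accept $L$ and $L'$ respectively with bounded positive one-sided error. Then there exists an end-decisive MM-QFA that accepts $L\cap L'$ with bounded positive one-sided error.
   Context: A measure-many quantum finite automaton (MM-QFA) over $\Sigma$ is a tuple $(Q,\Sigma,\{U_\sigma\}_{\sigma\in\Sigma\cup\{\$\}},q_0,Q_{acc},Q_{rej})$ with $Q$ finite indexing an orthonormal basis of $\mathbb{C}^Q$, end-marker $\$\notin\Sigma$, unitary $U_\sigma$, initial state $q_0$, and $Q$ partitioned into $Q_{acc},Q_{rej},Q_{non}$ with orthogonal projections $P_{acc},P_{rej},P_{non}$. On input $x$ it processes $x\$$ maintaining $(\psi,p_{acc},p_{rej})$, initially $(|q_0\rangle,0,0)$; on reading $\sigma$: $\psi'=U_\sigma\psi$, $p_{acc}\mathrel{+}=\|P_{acc}\psi'\|^2$, $p_{rej}\mathrel{+}=\|P_{rej}\psi'\|^2$, $\psi\leftarrow P_{non}\psi'$; the acceptance probability $p(x)$ is the final $p_{acc}$. It is end-decisive if $P_{acc}\psi'=0$ after reading every non-end-marker symbol, on every input. It accepts $L$ with bounded positive one-sided error if there is $c>0$ with $p(x)>c$ for all $x\in L$ and $p(x)=0$ for all $x\notin L$. *)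

(* Defs.v *)
From mathcomp Require Import all_boot all_algebra.
From mathcomp Require Import complex.
From mathcomp Require Import Rstruct.
Set Implicit Arguments. Unset Strict Implicit. Unset Printing Implicit Defensive.
Import GRing.Theory Num.Theory.
Local Open Scope ring_scope.

Notation Rl := Rdefinitions.R.
Notation Cx := (Rl[i]).

Definition normsq (z : Cx) : Rl := (complex.Re z) ^+ 2 + (complex.Im z) ^+ 2.

Definition adjmx (m n : nat) (A : 'M[Cx]_(m, n)) : 'M[Cx]_(n, m) :=
  (map_mx (fun z : Cx => z^*) A)^T.

Definition unitarymx (n : nat) (A : 'M[Cx]_n) : Prop :=
  A *m adjmx A = 1%:M /\ adjmx A *m A = 1%:M.

(* An MM-QFA over the alphabet Sigma.  The state set is Q = 'I_n (any finite set
   can be indexed this way); input letters are [Some s], the end-marker $ is [None].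
   States are column vectors in C^Q. *)
Record mmqfa (Sigma : finType) := MMQFA {
  qn   : nat;
  qU   : option Sigma -> 'M[Cx]_qn;
  qq0  : 'I_qn;
  qacc : {set 'I_qn};
  qrej : {set 'I_qn}
}.

Section MMQFA.
Variable Sigma : finType.
Variable M : mmqfa Sigma.

Definition qnon : {set 'I_(qn M)} := ~: (qacc M :|: qrej M).

Definition mmqfa_wf : Prop :=
  (forall s : option Sigma, unitarymx (qU M s)) /\ [disjoint qacc M & qrej M].

Definition ket (q : 'I_(qn M)) : 'cV[Cx]_(qn M) :=
  \col_i (if i == q then 1 else 0).

Definition proj (A : {set 'I_(qn M)}) (v : 'cV[Cx]_(qn M)) : 'cV[Cx]_(qn M) :=
  \col_i (if i \in A then v i 0 else 0).

Definition sqnorm (v : 'cV[Cx]_(qn M)) : Rl := \sum_i normsq (v i 0).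

Definition config := ('cV[Cx]_(qn M) * Rl * Rl)%type.

Definition step (c : config) (s : option Sigma) : config :=
  let: (psi, pa, pr) := c in
  let psi' := qU M s *m psi in
  (proj qnon psi', pa + sqnorm (proj (qacc M) psi'), pr + sqnorm (proj (qrej M) psi')).

Definition init_config : config := (ket (qq0 M), 0, 0).

Definition run (x : seq Sigma) : config :=
  foldl step init_config (rcons (map Some x) None).

Definition accprob (x : seq Sigma) : Rl := (run x).1.2.

Definition state_after (w : seq Sigma) : 'cV[Cx]_(qn M) :=
  (foldl step init_config (map Some w)).1.1.

Definition end_decisive : Prop :=
  forall (w : seq Sigma) (s : Sigma),
    proj (qacc M) (qU M (Some s) *m state_after w) = 0.

Definition accepts_bpose (L : seq Sigma -> Prop) : Prop :=
  exists c : Rl, 0 < c /\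
    forall x : seq Sigma, (L x -> c < accprob x) /\ (~ L x -> accprob x = 0).

End MMQFA.

(* Main.v *)
Require Import Defs.
From mathcomp Require Import all_boot all_algebra.
From mathcomp Require Import complex.
From mathcomp Require Import Rstruct.
From mathcomp Require Import mxtens ring lra.
From Stdlib Require Import Classical.
From mathcomp Require Import order.
Import Order.TTheory GRing.Theory Num.Theory.
Local Open Scope ring_scope.

Set Implicit Arguments.

Definition tv {n n'} (u : 'cV[Cx]_n) (v : 'cV[Cx]_n') : 'cV[Cx]_(n * n') := u *t v.

Lemma tvE n n' (u : 'cV[Cx]_n) (v : 'cV[Cx]_n') i j k :
  tv u v (mxtens_index (i, j)) k = u i 0 * v j 0.
Proof.
rewrite /tv mxE mxtens_indexK.
rewrite (ord1 k) /=; congr (u i _ * v j _); exact: val_inj.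
Qed.

Lemma tv_mul m n p q (A : 'M[Cx]_(m, n)) (B : 'M[Cx]_(p, q)) u v :
  (A *t B) *m tv u v = tv (A *m u) (B *m v).
Proof. exact (tensmx_mul A B u v). Qed.

Lemma index_eq m n (i : 'I_m) (j : 'I_n) i' j' :
  (mxtens_index (i, j) == mxtens_index (i', j')) = (i == i') && (j == j').
Proof. by rewrite (inj_eq (can_inj (@mxtens_indexK _ _))) xpair_eqE. Qed.

Definition pacc (Sigma : finType) (M M' : mmqfa Sigma) : {set 'I_(qn M * qn M')} :=
  [set k | ((mxtens_unindex k).1 \in qacc M) && ((mxtens_unindex k).2 \in qacc M')].
Definition prej (Sigma : finType) (M M' : mmqfa Sigma) : {set 'I_(qn M * qn M')} :=
  [set k | ((mxtens_unindex k).1 \in qrej M) || ((mxtens_unindex k).2 \in qrej M')].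

Definition prodA (Sigma : finType) (M M' : mmqfa Sigma) : mmqfa Sigma :=
  @MMQFA Sigma (qn M * qn M') (fun s => qU M s *t qU M' s)
    (mxtens_index (qq0 M, qq0 M')) (pacc M M') (prej M M').

Lemma adj_tens m n p q (A : 'M[Cx]_(m,n)) (B : 'M[Cx]_(p,q)) :
  adjmx (A *t B) = adjmx A *t adjmx B.
Proof. by apply/matrixP => i j; rewrite !mxE rmorphM. Qed.

Lemma tens11 m n : (1%:M : 'M[Cx]_m) *t (1%:M : 'M[Cx]_n) = 1%:M.
Proof.
apply/matrixP => i j; case: (mxtens_indexP i) => i1 i2.
case: (mxtens_indexP j) => j1 j2.
rewrite tensmxE !mxE index_eq.
by case: (i1 == j1); case: (i2 == j2); rewrite ?mulr1 ?mul0r ?mulr0.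
Qed.

Lemma unitary_tens m n (A : 'M[Cx]_m) (B : 'M[Cx]_n) :
  Defs.unitarymx A -> Defs.unitarymx B -> Defs.unitarymx (A *t B).
Proof.
move=> [h1 h2] [h3 h4]; split; rewrite adj_tens tensmx_mul.
  by rewrite h1 h3 tens11.
by rewrite h2 h4 tens11.
Qed.

Lemma normsqM (x y : Cx) : normsq (x * y) = normsq x * normsq y.
Proof.
case: x => a b; case: y => c d.
have -> : ((a +i* b) * (c +i* d) = (a * c - b * d) +i* (a * d + b * c))%C by [].
rewrite /normsq /=; ring.
Qed.

Lemma sqnorm0 (Sigma : finType) (M : mmqfa Sigma) : sqnorm (M:=M) 0 = 0.
Proof.
rewrite /sqnorm big1 // => i _; rewrite mxE /normsq /=.
by rewrite expr0n /= addr0.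
Qed.

Lemma sqnorm_tens (Sigma : finType) (M M' : mmqfa Sigma) u v :
  sqnorm (M:=prodA M M') (tv u v) = sqnorm (M:=M) u * sqnorm (M:=M') v.
Proof.
rewrite /sqnorm (reindex (@mxtens_index _ _)) /=; last first.
  by exists (@mxtens_unindex _ _) => x _; [apply: mxtens_indexK | apply: mxtens_unindexK].
rewrite big_distrl /=.
rewrite (eq_bigr (fun i => \sum_j normsq (u i 0) * normsq (v j 0))); last first.
  by move=> i _; rewrite big_distrr.
rewrite pair_big /=; apply: eq_bigr => -[i j] _ /=.
by rewrite tvE normsqM.
Qed.

Lemma proj_acc_tens (Sigma : finType) (M M' : mmqfa Sigma) u v :
  proj (M:=prodA M M') (pacc M M') (tv u v) =
  tv (proj (M:=M) (qacc M) u) (proj (M:=M') (qacc M') v).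
Proof.
apply/matrixP => k l; case: (mxtens_indexP k) => i j.
rewrite [LHS]mxE [RHS]tvE tvE !mxE inE mxtens_indexK /=.
by case: (i \in qacc M); case: (j \in qacc M'); rewrite /= ?mul0r ?mulr0.
Qed.

Lemma proj_non_tens (Sigma : finType) (M M' : mmqfa Sigma) u v :
  proj (M:=M) (qacc M) u = 0 -> proj (M:=M') (qacc M') v = 0 ->
  proj (M:=prodA M M') (qnon (prodA M M')) (tv u v) =
  tv (proj (M:=M) (qnon M) u) (proj (M:=M') (qnon M') v).
Proof.
move=> hu hv.
have hu' i : i \in qacc M -> u i 0 = 0.
  by move=> hi; move/matrixP: hu => /(_ i 0); rewrite !mxE hi.
have hv' i : i \in qacc M' -> v i 0 = 0.
  by move=> hi; move/matrixP: hv => /(_ i 0); rewrite !mxE hi.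
apply/matrixP => k l; case: (mxtens_indexP k) => i j.
rewrite [LHS]mxE [RHS]tvE tvE !mxE /qnon !inE mxtens_indexK /=.
case Ha: (i \in qacc M); first by rewrite hu' // !mul0r; case: ifP.
case Ha': (j \in qacc M'); first by rewrite hv' // !mulr0; case: ifP.
by case: (i \in qrej M); case: (j \in qrej M'); rewrite /= ?mul0r ?mulr0.
Qed.

Lemma step11 (Sigma : finType) (M : mmqfa Sigma) c s :
  (step (M:=M) c s).1.1 = proj (M:=M) (qnon M) (qU M s *m c.1.1).
Proof. by case: c => [[? ?] ?]. Qed.

Lemma step12 (Sigma : finType) (M : mmqfa Sigma) c s :
  (step (M:=M) c s).1.2 = c.1.2 + sqnorm (M:=M) (proj (M:=M) (qacc M) (qU M s *m c.1.1)).
Proof. by case: c => [[? ?] ?]. Qed.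

Lemma pa0 (Sigma : finType) (M : mmqfa Sigma) : end_decisive M -> forall w,
  (foldl (@step _ M) (init_config M) (map Some w)).1.2 = 0.
Proof.
move=> ed; elim/last_ind => [|w s IH] //=.
rewrite map_rcons foldl_rcons step12 IH add0r.
by have := ed w s; rewrite /state_after => ->; rewrite sqnorm0.
Qed.

Lemma sim (Sigma : finType) (M M' : mmqfa Sigma) :
  end_decisive M -> end_decisive M' -> forall w,
  state_after (prodA M M') w = tv (state_after M w) (state_after M' w).
Proof.
move=> ed ed'; elim/last_ind => [|w s IH].
  apply/matrixP => k l; case: (mxtens_indexP k) => i j.
  rewrite tvE !mxE /= index_eq.
  by case: (i == _); case: (j == _); rewrite ?mulr1 ?mul0r ?mulr0.
have e1 := ed w s; have e2 := ed' w s.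
rewrite /state_after in IH e1 e2 *.
rewrite !map_rcons !foldl_rcons !step11 IH /= tv_mul.
exact: proj_non_tens.
Qed.

Lemma edN (Sigma : finType) (M M' : mmqfa Sigma) :
  end_decisive M -> end_decisive M' -> end_decisive (prodA M M').
Proof.
move=> ed ed' w s.
rewrite (sim ed ed') /= tv_mul.
by rewrite proj_acc_tens ed ed' /tv tens0mx.
Qed.

Lemma accprob_eq (Sigma : finType) (M : mmqfa Sigma) x : end_decisive M ->
  accprob M x = sqnorm (M:=M) (proj (M:=M) (qacc M) (qU M None *m state_after M x)).
Proof.
move=> ed; rewrite /accprob /run foldl_rcons step12 pa0 // add0r.
by [].
Qed.

Unset Implicit Arguments.

Theorem corollary4p9 (Sigma : finType) (L L' : seq Sigma -> Prop)
    (M M' : mmqfa Sigma) :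
  mmqfa_wf M -> end_decisive M -> accepts_bpose M L ->
  mmqfa_wf M' -> end_decisive M' -> accepts_bpose M' L' ->
  exists N : mmqfa Sigma,
    mmqfa_wf N /\ end_decisive N /\ accepts_bpose N (fun x => L x /\ L' x).
Proof.
move=> [wu wd] ed [c [c0 hc]] [wu' wd'] ed' [c' [c0' hc']].
have edn := edN ed ed'.
exists (prodA M M'); split; [|split; first exact: edn].
  split; first by move=> s; apply: unitary_tens.
  rewrite -setI_eq0; apply/eqP/setP => k; rewrite !inE.
  case: (mxtens_indexP k) => i j; rewrite mxtens_indexK /=.
  have h1 : (i \in qacc M) && (i \in qrej M) = false.
    by apply/negP => /andP [a b]; move: (disjointFr wd a); rewrite b.
  have h2 : (j \in qacc M') && (j \in qrej M') = false.
    by apply/negP => /andP [a b]; move: (disjointFr wd' a); rewrite b.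
  move: h1 h2.
  by case: (i \in qacc M); case: (j \in qacc M'); case: (i \in qrej M);
     case: (j \in qrej M').
have hp x : accprob (prodA M M') x = accprob M x * accprob M' x.
  rewrite !accprob_eq // (sim ed ed') /= tv_mul.
  by rewrite proj_acc_tens sqnorm_tens.
exists (c * c'); split; first exact: mulr_gt0.
move=> x; split.
  move=> [Lx L'x]; rewrite hp.
  have a := (hc x).1 Lx; have b := (hc' x).1 L'x.
  apply: ltr_pM => //; exact: ltW.
move=> nL; case: (classic (L x)) => Lx.
  have nL' : ~ L' x by tauto.
  by rewrite hp ((hc' x).2 nL') mulr0.
by rewrite hp ((hc x).2 Lx) mul0r.
Qed.
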